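(* Let $n\in\mathbb{N}$ and $1\le t\le 2^n$. Let $T$ be a uniformly random subset of $\mathbb{F}_2^n$ of size $|T|=t$, and let $k$ be a uniformly random element of $T$. For $0\le d\le n$ let $\#_d(k)=|\{z\in T:d_H(z,k)=d\}|$, with $d_H$ the Hamming distance. Then for all integers $x$, $$P(\#_d(k)=x)=\begin{cases}1 & d=0\wedge x=1,\\ 0 & d=0\wedge x\ne1,\\ \mathrm{hypgeom}(\mathbf X,\mathbf x) & \text{otherwise},\end{cases}$$ with $\mathbf X=\left(\binom nd,\,2^n-1-\binom nd\right)$ and $\mathbf x=(x,\,|T|-1-x)$. Moreover, for $0\le d_1,d_2\le n$ and integers $x_1,x_2$, $$P(\#_{d_1}(k)=x_1,\#_{d_2}(k)=x_2)=\begin{cases}P(\#_{d_1}(k)=x_1)P(\#_{d_2}(k)=x_2) & d_1=0\vee d_2=0,\\ P(\#_{d_1}(k)=x_1) & d_1=d_2\wedge x_1=x_2,\\ 0 & d_1=d_2\wedge x_1\ne x_2,\\ \mathrm{hypgeom}(\mathbf X,\mathbf x) & \text{otherwise},\end{cases}$$ with $\mathbf X=\left(\binom n{d_1},\binom n{d_2},\,2^n-1-\binom n{d_1}-\binom n{d_2}\right)$ and $\mathbf x=(x_1,x_2,\,|T|-1-x_1-x_2)$.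
   Context: $\mathrm{hypgeom}(\mathbf X,\mathbf x)$ is the multivariate hypergeometric probability: for an urn with $X_i$ balls of colour $i$ ($i=1,\dots,m$), $N=\sum_iX_i$, drawing $s=\sum_ix_i$ balls without replacement, the probability of obtaining exactly $x_i$ balls of colour $i$ for all $i$ is $\prod_{i=1}^m\binom{X_i}{x_i}\big/\binom{N}{s}$ (taken to be $0$ when some $x_i<0$). *)

(* Defs.v *)
From HB Require Import structures.
From mathcomp Require Import all_boot all_order all_algebra.
Set Implicit Arguments. Unset Strict Implicit. Unset Printing Implicit Defensive.
Import Order.TTheory GRing.Theory Num.Theory.
Local Open Scope ring_scope.

Notation F2n n := 'rV['F_2]_n.

Definition dH (n : nat) (z k : F2n n) : nat :=
  #|[set i : 'I_n | z ord0 i != k ord0 i]|.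

Definition countd (n : nat) (T : {set F2n n}) (k : F2n n) (d : nat) : nat :=
  #|[set z in T | dH z k == d]|.

Definition hypgeom (X : seq nat) (x : seq int) : rat :=
  if has (fun v : int => v < 0) x then 0
  else (\prod_(p <- zip X x) ('C(p.1, `|p.2|%N))%:R)
         / ('C(sumn X, sumn (map (fun v : int => `|v|%N) x)))%:R.

(* Probability of an event E(T,k) where T is a uniform random t-subset of
   F_2^n and k is a uniform random element of T. *)
Definition Prob (n t : nat) (E : {set F2n n} -> F2n n -> bool) : rat :=
  \sum_(T : {set F2n n} | #|T| == t)
     (('C(2 ^ n, t))%:R)^-1 * \sum_(k in T) (t%:R)^-1 * (E T k)%:R.
Arguments Prob n t E : clear implicits.

(* Main.v *)
Require Import Defs.
From HB Require Import structures.
From mathcomp Require Import all_boot all_order all_algebra.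
From mathcomp Require Import zify ring.
Import Order.TTheory GRing.Theory Num.Theory.


Lemma card_ksub (T : finType) (V : {set T}) c m :
  #|[set S : {set T} | (S \subset V) && (#|S| + c == m)]| =
  (if (c <= m)%N then 'C(#|V|, m - c) else 0)%N.
Proof.
case: leqP => hc.
  rewrite -cards_draws; apply: eq_card => S; rewrite !inE.
  case: (S \subset V) => //=; apply/eqP/eqP; lia.
apply: eq_card0 => S; rewrite !inE; apply/negP => /andP[_ /eqP]; lia.
Qed.

Lemma splitL (T : finType) (U A : {set T}) a (P : pred {set T}) :
  #|[set S : {set T} | (S \subset U) && ((#|S :&: A| == a) && P (S :\: A))]| =
  ('C(#|U :&: A|, a) * #|[set S : {set T} | (S \subset U :\: A) && P S]|)%N.
Proof.
set L := [set S | _].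
pose f (S : {set T}) := (S :&: A, S :\: A).
have finj : injective f.
  by move=> S1 S2 [e1 e2]; rewrite -(setID S1 A) -(setID S2 A) e1 e2.
rewrite -(card_imset L finj) -cards_draws -cardsX.
apply: eq_card => -[S1 S2]; rewrite !inE /=.
apply/imsetP/idP.
  move=> [S]; rewrite !inE => /andP[sU /andP[ca pS]] [-> ->] /=.
  by rewrite ca pS setSI ?setSD.
move=> /andP[/andP[s1 c1] /andP[s2 p2]].
have d1 : S1 :&: A = S1.
  by apply/setIidPl; apply: subset_trans s1 (subsetIr _ _).
have d2 : S2 :&: A = set0.
  apply/setP=> z; rewrite !inE; apply/negP => /andP[z2 zA].
  by move: (subsetP s2 z z2); rewrite !inE zA.
have e1 : (S1 :|: S2) :&: A = S1 by rewrite setIUl d1 d2 setU0.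
have e2 : (S1 :|: S2) :\: A = S2.
  rewrite setDUl; have -> : S1 :\: A = set0.
    by apply/setP=> z; rewrite !inE; apply/negP=> /andP[/negP + z1]; apply; 
       move: (subsetP s1 z z1); rewrite !inE => /andP[].
  rewrite set0U; apply/setDidPl; rewrite -setI_eq0 d2 //.
exists (S1 :|: S2); last by rewrite /f e1 e2.
rewrite !inE e1 e2 c1 p2 andbT subUset.
rewrite (subset_trans s1) ?subsetIl // (subset_trans s2) ?subsetDl //.
Qed.

Lemma count_single (T : finType) (U A : {set T}) a c m :
  #|[set S : {set T} | (S \subset U) && ((#|S :&: A| == a) && (#|S| + c == m))]| =
  ('C(#|U :&: A|, a) * (if (a + c <= m)%N then 'C(#|U :\: A|, m - (a + c)) else 0))%N.
Proof.
rewrite -card_ksub -(@splitL _ U A a (fun S => #|S| + (a + c) == m)).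
apply: eq_card => S; rewrite !inE.
case: (S \subset U) => //=; case: eqP => //= ha.
by rewrite -(cardsID A S) ha; apply/eqP/eqP; lia.
Qed.

Lemma count_double (T : finType) (U A B : {set T}) a b c m :
  [disjoint A & B] ->
  #|[set S : {set T} | (S \subset U) &&
      ((#|S :&: A| == a) && ((#|S :&: B| == b) && (#|S| + c == m)))]| =
  ('C(#|U :&: A|, a) * ('C(#|(U :\: A) :&: B|, b) *
     (if (b + (a + c) <= m)%N then 'C(#|(U :\: A) :\: B|, m - (b + (a + c))) else 0)))%N.
Proof.
move=> dAB.
rewrite -count_single -(@splitL _ U A a
  (fun S => (#|S :&: B| == b) && (#|S| + (a + c) == m))).
apply: eq_card => S; rewrite !inE.
case: (S \subset U) => //=; case: eqP => //= ha.
have -> : (S :\: A) :&: B = S :&: B.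
  apply/setP => z; rewrite !inE; case zB: (z \in B); rewrite ?andbF ?andbT //.
  have: z \notin A by rewrite (disjointFl dAB).
  by move=> ->.
by rewrite -(cardsID A S) ha; congr (_ && _); apply/eqP/eqP; lia.
Qed.

Local Open Scope ring_scope.

Lemma F2c (a  : 'F_2) : a = 0 \/ a = 1.
Proof. case: a => [[|[|m]] H]; [left|right|by []]; exact/val_inj. Qed.
Lemma F2_11 : 1 + 1 = 0 :> 'F_2. Proof. exact/val_inj. Qed.
Lemma F2_10 : 1 != 0 :> 'F_2. Proof. exact: oner_neq0. Qed.
Lemma F2_fact (a b : 'F_2) : b + (a != b)%:R = a.
Proof. by case: (F2c a) => ->; case: (F2c b) => ->; rewrite ?eqxx ?addr0 // ?F2_10 ?(negbTE F2_10) ?eq_sym ?F2_10 /= ?add0r ?F2_11. Qed.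
Lemma F2_fact2 (b : 'F_2) (c : bool) : (b + c%:R != b) = c.
Proof. case: c => /=; last by rewrite addr0 eqxx.
by case: (F2c b) => ->; rewrite ?add0r ?F2_11 ?F2_10 // eq_sym F2_10. Qed.

Lemma card_F2n n : #|{: F2n n}| = (2 ^ n)%N.
Proof. by rewrite card_mx card_Fp // mul1n. Qed.

Lemma card_Ad n (k : F2n n) d : #|[set z : F2n n | dH z k == d]| = 'C(n, d).
Proof.
pose f (z : F2n n) := [set i : 'I_n | z ord0 i != k ord0 i].
pose g (D : {set 'I_n}) : F2n n := \row_i (k ord0 i + (i \in D)%:R).
have fg : cancel f g.
  by move=> z; apply/rowP => i; rewrite mxE inE F2_fact.
have gf : cancel g f.
  by move=> D; apply/setP => i; rewrite inE mxE F2_fact2.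
have -> : [set z : F2n n | dH z k == d] = f @^-1: [set D : {set 'I_n} | #|D| == d].
  by apply/setP => z; rewrite !inE.
rewrite -(can2_imset_pre _ gf fg) card_imset; last exact: can_inj gf.
by rewrite card_draws card_ord.
Qed.

Definition Nk n t (E : {set F2n n} -> F2n n -> bool) (k : F2n n) : nat :=
  #|[set T : {set F2n n} | (k \in T) && ((#|T| == t)%N && E T k)]|.

Arguments Nk {n}.

Lemma ProbE n t E :
  Prob n t E = ('C(2 ^ n, t)%:R)^-1 * ((t%:R)^-1 * (\sum_k Nk t E k)%:R).
Proof.
rewrite /Prob -mulr_sumr; under [in LHS]eq_bigr => T _ do rewrite -mulr_sumr.
rewrite -mulr_sumr /Nk natr_sum.
congr (_ * (_ * _)).
under [RHS]eq_bigr do rewrite -sum1_card natr_sum big_mkcond.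
rewrite [RHS]exchange_big /= big_mkcond /=; apply: eq_bigr => T _.
under [RHS]eq_bigr do rewrite inE.
rewrite big_mkcond /=; case: (#|T| == t)%N; last by rewrite big1 // => k _; case: (k \in T).
apply: eq_bigr => k _; by case: (k \in T); case: (E T k).
Qed.

Lemma final_eq n t V : (1 <= t)%N -> (t <= 2 ^ n)%N ->
  ('C(2 ^ n, t)%:R)^-1 * ((t%:R)^-1 * ((2 ^ n * V)%N)%:R) =
  (V%:R / ('C(2 ^ n - 1, t - 1))%:R : rat).
Proof.
move=> ht1 ht2.
have h := mul_bin_diag (2 ^ n) (t - 1).
rewrite subn1 prednK // in h.
have hC : ('C(2 ^ n, t)%:R : rat) != 0 by rewrite pnatr_eq0 -lt0n bin_gt0.
have hC' : ('C((2 ^ n).-1, t.-1)%:R : rat) != 0.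
  by rewrite pnatr_eq0 -lt0n bin_gt0; lia.
have ht : (t%:R : rat) != 0 by rewrite pnatr_eq0; lia.
have h' : ((2 ^ n)%:R : rat) = t%:R * 'C(2 ^ n, t)%:R / 'C((2 ^ n).-1, t.-1)%:R.
  by rewrite -natrM -h natrM mulfK.
rewrite natrM h' !subn1; field; rewrite hC hC' ht //.
Qed.

Lemma Prob_ext n t E E' : (forall T k, E T k = E' T k) -> Prob n t E = Prob n t E'.
Proof. by move=> h; rewrite /Prob; apply: eq_bigr => T _; under eq_bigr do rewrite h. Qed.

Lemma Prob_false n t : Prob n t (fun _ _ => false) = 0.
Proof. by rewrite /Prob big1 // => T _; rewrite big1 ?mulr0 // => k _; rewrite mulr0. Qed.

Lemma Nk_eq n t (E : {set F2n n} -> F2n n -> bool) (k : F2n n) (P : pred {set F2n n}) :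
  (forall T : {set F2n n}, k \in T -> ((#|T| == t)%N && E T k) = P (T :\ k)) ->
  Nk t E k = #|[set S : {set F2n n} | (S \subset ~: [set k]) && P S]|.
Proof.
move=> hP; rewrite /Nk.
have := @splitL _ setT [set k] 1 P.
rewrite setTI cards1 bin1 mul1n setTD => <-.
apply: eq_card => T; rewrite !inE subsetT /=.
case kT: (k \in T).
  by rewrite (setIidPr _) ?sub1set // cards1 eqxx /= hP.
have -> : T :&: [set k] = set0.
  by apply/setP => z; rewrite !inE; case: (z =P k) => [->|]; rewrite ?kT ?andbF.
by rewrite cards0.
Qed.

Definition Ad n (k : F2n n) d := [set z : F2n n | dH z k == d].
Arguments Ad {n}.

Lemma dH0 n (z k : F2n n) : (dH z k == 0%N) = (z == k).
Proof.
rewrite /dH cards_eq0; apply/eqP/eqP => [h|->].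
  apply/rowP => i; apply/eqP; move/setP: h => /(_ i); rewrite !inE.
  by rewrite [ord0]ord1 => /negbFE.
by apply/setP => i; rewrite !inE eqxx.
Qed.
Arguments dH0 {n}.

Lemma kAd n (k : F2n n) d : (0 < d)%N -> k \notin Ad k d.
Proof. by move=> d0; rewrite inE; have := dH0 k k; rewrite eqxx; move/eqP ->; rewrite eq_sym -lt0n. Qed.

Lemma countdE n (T : {set F2n n}) k d (d0 : (0 < d)%N) :
  countd T k d = #|(T :\ k) :&: Ad k d|.
Proof.
rewrite /countd; apply: eq_card => z; rewrite !inE; case: (z =P k) => [->|_] //=.
move: (dH0 k k); rewrite eqxx => /eqP ->; by rewrite (ltn_eqF d0) andbF.
Qed.

Lemma countd0 n (T : {set F2n n}) k : k \in T -> countd T k 0 = 1%N.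
Proof.
move=> kT; rewrite /countd; transitivity #|[set k]|; last exact: cards1.
apply: eq_card => z; rewrite !inE dH0.
by case: (z =P k) => [->|_]; rewrite ?kT ?andbF.
Qed.

Lemma cardT1 n (T : {set F2n n}) k : k \in T -> #|T| = (#|T :\ k| + 1)%N.
Proof. by move=> kT; rewrite (cardsD1 k T) kT addnC. Qed.

Lemma ltz0_nat (m : nat) : (m%:Z < 0) = false.
Proof. by rewrite ltNge le0z_nat. Qed.

Lemma hyp2 (N C a t : nat) : (1 <= t)%N -> (C <= N)%N ->
  ((('C(C, a) * (if (a + 1 <= t)%N then 'C(N - C, t - (a + 1)) else 0))%N)%:R
    / ('C(N, t - 1))%:R : rat)
  = hypgeom [:: C; (N - C)%N] [:: a%:Z; t%:Z - 1 - a%:Z].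
Proof.
move=> ht hC; rewrite /hypgeom /=.
case: leqP => h.
  have -> : t%:Z - 1 - a%:Z = (t - (a + 1))%N%:Z by lia.
  rewrite !ltz0_nat /= !big_cons big_nil /=.
  have -> : (C + (N - C + 0))%N = N by lia.
  have -> : (a + (t - (a + 1) + 0))%N = (t - 1)%N by lia.
  by rewrite mulr1 natrM.
have -> : (t%:Z - 1 - a%:Z < 0) = true by apply/idP; lia.
by rewrite /= muln0 mul0r.
Qed.

Lemma hyp3 (N C1 C2 a b t : nat) : (1 <= t)%N -> (C1 + C2 <= N)%N ->
  ((('C(C1, a) * ('C(C2, b) * (if (b + (a + 1) <= t)%N
       then 'C(N - C1 - C2, t - (b + (a + 1))) else 0)))%N)%:R
    / ('C(N, t - 1))%:R : rat)
  = hypgeom [:: C1; C2; (N - C1 - C2)%N] [:: a%:Z; b%:Z; t%:Z - 1 - a%:Z - b%:Z].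
Proof.
move=> ht hC; rewrite /hypgeom /=.
case: leqP => h.
  have -> : t%:Z - 1 - a%:Z - b%:Z = (t - (b + (a + 1)))%N%:Z by lia.
  rewrite !ltz0_nat /= !big_cons big_nil /=.
  have -> : (C1 + (C2 + (N - C1 - C2 + 0)))%N = N by lia.
  have -> : (a + (b + (t - (b + (a + 1)) + 0)))%N = (t - 1)%N by lia.
  by rewrite mulr1 !natrM mulrA.
have -> : (t%:Z - 1 - a%:Z - b%:Z < 0) = true by apply/idP; lia.
by rewrite /= ?orbT /= !muln0 mul0r.
Qed.

Lemma card_nk n (k : F2n n) : #|~: [set k]| = (2 ^ n - 1)%N.
Proof. by rewrite cardsC1 card_F2n subn1. Qed.

Lemma sum_const_k n (V : nat) : (\sum_(k : F2n n) V)%N = (2 ^ n * V)%N.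
Proof. by rewrite sum_nat_const card_F2n. Qed.

Lemma Prob_true n t : (1 <= t)%N -> (t <= 2 ^ n)%N -> Prob n t (fun _ _ => true) = 1.
Proof.
move=> ht1 ht2; rewrite ProbE.
have hk : forall k : F2n n, Nk t (fun _ _ => true) k = 'C(2 ^ n - 1, t - 1).
  move=> k; rewrite (@Nk_eq _ _ _ k (fun S => (#|S| + 1 == t)%N)).
    by rewrite card_ksub ht1 card_nk.
  by move=> T kT; rewrite andbT (cardT1 _ _ _ kT).
under eq_bigr do rewrite hk.
rewrite sum_const_k final_eq // divff // pnatr_eq0 -lt0n bin_gt0; lia.
Qed.

Lemma Prob_d0 n t (x : int) E :
  Prob n t (fun T k => ((countd T k 0)%:Z == x) && E T k) = (x == 1)%:R * Prob n t E.
Proof.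
rewrite !ProbE.
have hk : forall k : F2n n, Nk t (fun T k => ((countd T k 0)%:Z == x) && E T k) k
   = if x == 1 then Nk t E k else 0%N.
  move=> k; rewrite /Nk; case: ifP => hx.
    apply: eq_card => T; rewrite !inE; case kT: (k \in T) => //=.
    by rewrite countd0 // (eqP hx) eqxx.
  apply: eq_card0 => T; rewrite !inE; case kT: (k \in T) => //=.
  have -> : ((countd T k 0)%:Z == x) = false by rewrite countd0 // eq_sym; exact: hx.
  by rewrite andbF.
under eq_bigr do rewrite hk.
case: (x == 1); first by rewrite mul1r.
by rewrite big1 // mulr0 mulr0 mul0r.
Qed.

Lemma Ad_sub n (k : F2n n) d : (0 < d)%N -> Ad k d \subset ~: [set k].
Proof.
move=> d0; apply/subsetP => z zA; rewrite !inE; apply/eqP => ezk.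
by move: zA; rewrite ezk (negbTE (kAd _ k _ d0)).
Qed.

Arguments Ad_sub {n}.

Lemma card_Ad' n (k : F2n n) d : #|Ad k d| = 'C(n, d).
Proof. exact: card_Ad. Qed.

Arguments card_Ad' {n}.

Lemma Nk_single n t (k : F2n n) d (a : nat) : (0 < d)%N ->
  Nk t (fun T k => countd T k d == a) k =
  ('C('C(n, d), a) * (if (a + 1 <= t)%N then 'C(2 ^ n - 1 - 'C(n, d), t - (a + 1)) else 0))%N.
Proof.
move=> d0.
rewrite (@Nk_eq _ _ _ k (fun S => (#|S :&: Ad k d| == a) && (#|S| + 1 == t)%N)).
  rewrite count_single (setIidPr (Ad_sub k d d0)) cardsD (setIidPr (Ad_sub k d d0)).
  by rewrite card_nk card_Ad'.
by move=> T kT; rewrite (cardT1 _ _ _ kT) (countdE _ _ _ _ d0) andbC.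
Qed.

Lemma Nk_double n t (k : F2n n) d1 d2 (a b : nat) : (0 < d1)%N -> (0 < d2)%N -> d1 != d2 ->
  Nk t (fun T k => (countd T k d1 == a) && (countd T k d2 == b)) k =
  ('C('C(n, d1), a) * ('C('C(n, d2), b) * (if (b + (a + 1) <= t)%N
     then 'C(2 ^ n - 1 - 'C(n, d1) - 'C(n, d2), t - (b + (a + 1))) else 0)))%N.
Proof.
move=> d10 d20 d12.
have dis : [disjoint Ad k d1 & Ad k d2].
  rewrite -setI_eq0; apply/eqP/setP => z; rewrite !inE.
  by apply/negP => /andP[/eqP -> /eqP e]; move: d12; rewrite e eqxx.
have sub2 : Ad k d2 \subset ~: [set k] :\: Ad k d1.
  apply/subsetP => z z2; rewrite inE (subsetP (Ad_sub k d2 d20)) // andbT.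
  by rewrite (disjointFl dis) // z2.
rewrite (@Nk_eq _ _ _ k (fun S => (#|S :&: Ad k d1| == a) &&
    ((#|S :&: Ad k d2| == b) && (#|S| + 1 == t)%N))).
  rewrite count_double // (setIidPr (Ad_sub k d1 d10)) (setIidPr sub2).
  rewrite cardsD (setIidPr sub2) cardsD (setIidPr (Ad_sub k d1 d10)).
  by rewrite card_nk !card_Ad'.
move=> T kT; rewrite (cardT1 _ _ _ kT) (countdE _ _ _ _ d10) (countdE _ _ _ _ d20).
by rewrite andbC -andbA.
Qed.
Arguments Ad_sub {n}.
Arguments card_Ad' {n}.

Lemma Cle n d : (0 < d)%N -> ('C(n, d) <= 2 ^ n - 1)%N.
Proof.
move=> d0; pose k : F2n n := 0%R.
by rewrite -(card_Ad' k d) -(card_nk _ k) subset_leq_card // Ad_sub.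
Qed.

Lemma Cle2 n d1 d2 : (0 < d1)%N -> (0 < d2)%N -> d1 != d2 ->
  ('C(n, d1) + 'C(n, d2) <= 2 ^ n - 1)%N.
Proof.
move=> d10 d20 d12; pose k : F2n n := 0%R.
have dis : [disjoint Ad k d1 & Ad k d2].
  rewrite -setI_eq0; apply/eqP/setP => z; rewrite !inE.
  by apply/negP => /andP[/eqP -> /eqP e]; move: d12; rewrite e eqxx.
have sub2 : Ad k d2 \subset ~: [set k] :\: Ad k d1.
  apply/subsetP => z z2; rewrite inE (subsetP (Ad_sub k d2 d20)) // andbT.
  by rewrite (disjointFl dis) // z2.
have := subset_leq_card sub2.
rewrite cardsD (setIidPr (Ad_sub k d1 d10)) card_nk !card_Ad'.
have := Cle n d1 d10; lia.
Qed.

Lemma Prob_single n t d (x : int) : (1 <= t)%N -> (t <= 2 ^ n)%N -> (0 < d)%N ->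
  Prob n t (fun T k => (countd T k d)%:Z == x) =
  hypgeom [:: 'C(n, d); (2 ^ n - 1 - 'C(n, d))%N] [:: x; t%:Z - 1 - x].
Proof.
move=> ht1 ht2 d0; case: x => [a|m].
  rewrite (@Prob_ext _ _ _ (fun T k => countd T k d == a)) // ProbE.
  under eq_bigr do rewrite Nk_single //.
  by rewrite sum_const_k final_eq // hyp2 // Cle.
rewrite (@Prob_ext _ _ _ (fun _ _ => false)) // Prob_false.
by rewrite /hypgeom.
Qed.

Lemma Prob_double n t d1 d2 (x1 x2 : int) : (1 <= t)%N -> (t <= 2 ^ n)%N ->
  (0 < d1)%N -> (0 < d2)%N -> d1 != d2 ->
  Prob n t (fun T k => ((countd T k d1)%:Z == x1) && ((countd T k d2)%:Z == x2)) =
  hypgeom [:: 'C(n, d1); 'C(n, d2); (2 ^ n - 1 - 'C(n, d1) - 'C(n, d2))%N]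
          [:: x1; x2; t%:Z - 1 - x1 - x2].
Proof.
move=> ht1 ht2 d10 d20 d12; case: x1 => [a|m]; last first.
  rewrite (@Prob_ext _ _ _ (fun _ _ => false)) // Prob_false.
  by rewrite /hypgeom.
case: x2 => [b|m]; last first.
  rewrite (@Prob_ext _ _ _ (fun _ _ => false)) ?Prob_false.
    by rewrite /hypgeom /= ?ltz0_nat ?orbT.
  by move=> T k; rewrite andbF.
rewrite (@Prob_ext _ _ _ (fun T k => (countd T k d1 == a) && (countd T k d2 == b))) // ProbE.
under eq_bigr do rewrite Nk_double //.
by rewrite sum_const_k final_eq // hyp3 // Cle2.
Qed.

Lemma Prob_c0 n t (x : int) : (1 <= t)%N -> (t <= 2 ^ n)%N ->
  Prob n t (fun T k => (countd T k 0)%:Z == x) = (x == 1)%:R.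
Proof.
move=> ht1 ht2.
rewrite (@Prob_ext _ _ _ (fun T k => ((countd T k 0)%:Z == x) && true)).
  by rewrite Prob_d0 Prob_true // mulr1.
by move=> T k; rewrite andbT.
Qed.

Theorem lemma3 (n t : nat) (ht1 : (1 <= t)%N) (ht2 : (t <= 2 ^ n)%N) :
  (forall (d : nat) (x : int), (d <= n)%N ->
     Prob n t (fun T k => (countd T k d)%:Z == x) =
     (if d == 0%N then (if x == 1 then 1 else 0)
      else hypgeom [:: 'C(n, d); (2 ^ n - 1 - 'C(n, d))%N]
                   [:: x; t%:Z - 1 - x]))
  /\
  (forall (d1 d2 : nat) (x1 x2 : int), (d1 <= n)%N -> (d2 <= n)%N ->
     Prob n t (fun T k => ((countd T k d1)%:Z == x1) && ((countd T k d2)%:Z == x2)) =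
     (if (d1 == 0%N) || (d2 == 0%N) then
        Prob n t (fun T k => (countd T k d1)%:Z == x1) *
        Prob n t (fun T k => (countd T k d2)%:Z == x2)
      else if d1 == d2 then
        (if x1 == x2 then Prob n t (fun T k => (countd T k d1)%:Z == x1) else 0)
      else hypgeom [:: 'C(n, d1); 'C(n, d2); (2 ^ n - 1 - 'C(n, d1) - 'C(n, d2))%N]
                   [:: x1; x2; t%:Z - 1 - x1 - x2])).
Proof.
split.
  move=> d x hd; case: eqP => [->|/eqP d0].
    by rewrite Prob_c0 //; case: (x == 1).
  by rewrite Prob_single // lt0n.
move=> d1 d2 x1 x2 h1 h2.
case: (d1 =P 0%N) => [->|/eqP d10] /=.
  by rewrite Prob_d0 Prob_c0.
case: (d2 =P 0%N) => [->|/eqP d20] /=.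
  rewrite (@Prob_ext _ _ _ (fun T k => ((countd T k 0)%:Z == x2) && ((countd T k d1)%:Z == x1))).
    by rewrite Prob_d0 Prob_c0 // mulrC.
  by move=> T k; rewrite andbC.
case: (d1 =P d2) => [<-|/eqP d12].
  case: (x1 =P x2) => [<-|/eqP x12].
    by apply: Prob_ext => T k; rewrite andbb.
  rewrite (@Prob_ext _ _ _ (fun _ _ => false)) ?Prob_false //.
  by move=> T k; case: eqP => // ->; rewrite (negbTE x12).
by rewrite Prob_double // lt0n.
Qed.
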